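(* Let $f:(0,\infty)\to\mathbb{R}$ be such that $-f'$ is completely monotone on $(0,\infty)$, and suppose $\int_0^{t_0}|f(t)|t^\beta\,\mathrm{d}t<\infty$ for some $\beta\in(-1,\infty)$ and $t_0>0$. Then for any $\alpha\in[0,1]$, $m,n\in\mathbb{N}^\star$ and $c_1,c_2>0$, $$\int_0^{t_0}|f^{(m)}(c_1t)|^\alpha|f^{(n)}(c_2t)|^{1-\alpha}t^{m\alpha+n(1-\alpha)+\beta}\,\mathrm{d}t\le C\Big(\int_0^{t_0}|f(t)|t^\beta\,\mathrm{d}t+|f(t_0)|t_0^{1+\beta}\Big)$$ and $$\int_0^{t_0}|f(c_1t)|^\alpha|f^{(n)}(c_2t)|^{1-\alpha}t^{n(1-\alpha)+\beta}\,\mathrm{d}t\le C\Big(\int_0^{(c_1\vee1)t_0}|f(t)|t^\beta\,\mathrm{d}t+|f(t_0)|t_0^{1+\beta}\Big),$$ where $c_1\vee1=\max\{c_1,1\}$ and $C>0$ depends only on $m,n,\alpha,\beta,c_1,c_2$.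
   Context: A function $g:(0,\infty)\to\mathbb{R}$ is completely monotone if it is $C^\infty$ and $(-1)^ng^{(n)}(t)\ge0$ for all $t>0$ and $n\in\mathbb{N}$. *)

(* Defs.v *)
From HB Require Import structures.
From mathcomp Require Import all_boot all_order all_algebra.
From mathcomp Require Import all_classical all_reals all_analysis.
Set Implicit Arguments. Unset Strict Implicit. Unset Printing Implicit Defensive.
Import Order.TTheory GRing.Theory Num.Theory.
Import numFieldNormedType.Exports.
Local Open Scope classical_set_scope.
Local Open Scope ring_scope.

Definition smooth_pos {R : realType} (g : R -> R) : Prop :=
  forall (n : nat) (t : R), 0 < t -> derivable (derive1n n g) t 1.

Definition completely_monotone {R : realType} (g : R -> R) : Prop :=
  smooth_pos g /\
  forall (n : nat) (t : R), 0 < t -> 0 <= (-1) ^+ n * derive1n n g t.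

(* Main.v *)
Require Import Defs.
From HB Require Import structures.
From mathcomp Require Import all_boot all_order all_algebra.
From mathcomp Require Import all_classical all_reals all_analysis.
From mathcomp Require Import measurable_realfun ring lra.
Import Order.TTheory GRing.Theory Num.Theory.
Import numFieldNormedType.Exports.
Local Open Scope classical_set_scope.
Local Open Scope ring_scope.
Section smu.
Local Open Scope ereal_scope.
Context {R : realType} (l : R).
Local Notation mu := (@lebesgue_measure R).

Definition smu (A : set (measurableTypeR R)) : \bar R :=
  mu ((fun x : R => (l * x)%R) @^-1` A).

Let mphi : measurable_fun [set: measurableTypeR R] (fun x : R => (l * x)%R : measurableTypeR R).
Proof. exact: mulrl_measurable. Qed.

Let smu0 : smu set0 = 0.
Proof. by rewrite /smu preimage_set0 measure0. Qed.

Let smu_ge0 A : 0 <= smu A.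
Proof. exact: measure_ge0. Qed.

Let smu_sigma_additive : semi_sigma_additive smu.
Proof.
move=> F mF tF mUF; rewrite /smu preimage_bigcup.
apply: measure_semi_sigma_additive.
- by move=> n; rewrite -[X in measurable X]setTI; exact: mphi.
- apply/trivIsetP => /= i j _ _ ij; rewrite -preimage_setI.
  by move/trivIsetP : tF => /(_ _ _ _ _ ij) ->//; rewrite preimage_set0.
- by rewrite -preimage_bigcup -[X in measurable X]setTI; exact: mphi.
Qed.

HB.instance Definition _ := isMeasure.Build _ _ _
  smu smu0 smu_ge0 smu_sigma_additive.
End smu.

Section scale.
Context {R : realType}.
Local Notation mu := (@lebesgue_measure R).

Lemma scale_preimage (l a b : R) : 0 < l ->
  (fun x : R => l * x) @^-1` `]a, b] = `]a / l, b / l]%classic.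
Proof.
move=> l0; apply/seteqP; split => x /=; rewrite !in_itv/= => /andP[h1 h2];
  apply/andP; split.
- by rewrite ltr_pdivrMr// mulrC.
- by rewrite ler_pdivlMr// mulrC.
- by rewrite mulrC -ltr_pdivrMr.
- by rewrite mulrC -ler_pdivlMr.
Qed.

Lemma lebesgue_measure_scale (l : R) (A : set R) (l0 : 0 < l) : measurable A ->
  mu A = mscale (NngNum (ltW l0)) (smu l) A.
Proof.
move=> mA; apply: lebesgue_measure_unique => //= _ [[a b]] _ <-.
rewrite /mscale/= /smu scale_preimage// !lebesgue_measure_itv/= !lte_fin.
rewrite ltr_pM2r ?invr_gt0//.
case: ifPn => ab; last by rewrite mule0.
by rewrite -EFinB -EFinM -mulrBl mulrCA divff ?gt_eqF// mulr1.
Qed.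

Lemma integral_scale (l : R) (D : set R) (F : R -> \bar R) : 0 < l ->
  measurable D -> measurable_fun D F -> (forall x, D x -> (0 <= F x)%E) ->
  (\int[mu]_(x in (fun x => l * x)%R @^-1` D) F (l * x)%R =
   l^-1%:E * \int[mu]_(x in D) F x)%E.
Proof.
move=> l0 mD mF F0.
rewrite [in RHS](eq_measure_integral (mscale (NngNum (ltW l0)) (smu l))); last first.
  by move=> A mA _; apply: lebesgue_measure_scale.
rewrite ge0_integral_mscale//= muleA -EFinM mulVf ?gt_eqF// mul1e.
have mphi : measurable_fun [set: measurableTypeR R] (fun x : R => (l * x)%R : measurableTypeR R).
  exact: mulrl_measurable.
have := @ge0_integral_pushforward _ _ (measurableTypeR R) (measurableTypeR R) R
  (fun x : R => l * x) mphi mu D F mD mF.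
move=> -> //; by move=> y /set_mem; apply: F0.
Qed.
End scale.

Lemma preimage_scale_oo {R : realType} (l b : R) : 0 < l ->
  (fun x : R => l * x) @^-1` `]0, l * b[ = `]0, b[%classic.
Proof.
move=> l0; apply/seteqP; split => x /=; rewrite !in_itv/= => /andP[h1 h2];
  apply/andP; split.
- by rewrite pmulr_rgt0 in h1.
- by rewrite ltr_pM2l in h2.
- by rewrite mulr_gt0.
- by rewrite ltr_pM2l.
Qed.

Section meas.
Context {R : realType} (f : R -> R).
Hypothesis df : forall t, 0 < t -> derivable f t 1.
Local Notation mu := (@lebesgue_measure R).

Lemma mcont (h : R -> R) (b : R) : (forall t, 0 < t -> {for t, continuous h}) ->
  measurable_fun `]0, b[ h.
Proof.
move=> ch; apply: open_continuous_measurable_fun; first exact: interval_open.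
move=> x; rewrite inE/= in_itv/= => /andP[x0 _]; exact: ch.
Qed.

Lemma fcont t : 0 < t -> {for t, continuous f}.
Proof. by move=> t0; apply: differentiable_continuous; rewrite -derivable1_diffP; apply: df. Qed.

Lemma phi_meask (l k b beta : R) : 0 < l ->
  measurable_fun `]0, b[ (fun t => (`|f (l * t)| * (k * t) `^ beta)%:E).
Proof.
move=> l0; apply/measurable_EFinP; apply: measurable_funM.
  apply: mcont => t t0.
  apply: (@continuous_comp _ _ _ (fun t => l * t) (fun s => `|f s|)).
    exact: mulrl_continuous.
  apply: (@continuous_comp _ _ _ f (@Num.norm _ R)); first exact: fcont (mulr_gt0 l0 t0).
  exact: norm_continuous.
apply: (measurable_funS measurableT) => //.
have h := measurableT_comp (measurable_powR beta) (@mulrl_measurable R setT k). exact: h.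
Qed.

Lemma phi_meas (l b beta : R) : 0 < l ->
  measurable_fun `]0, b[ (fun t => (`|f (l * t)| * t `^ beta)%:E).
Proof.
move=> l0; have := phi_meask l 1 b beta l0; apply: eq_measurable_fun => x _.
by rewrite mul1r.
Qed.

Lemma G1 (l b T beta : R) : 0 < l -> 0 < b -> l * b <= T ->
  (\int[mu]_(t in `]0%R, b[) (`|f (l * t)| * t `^ beta)%:E <=
   (l `^ (-1 - beta))%:E * \int[mu]_(t in `]0%R, T[) (`|f t| * t `^ beta)%:E)%E.
Proof.
move=> l0 b0 lbT.
have lb0 : 0 < l * b by rewrite mulr_gt0.
have mF : measurable_fun `]0, T[ (fun t => (`|f t| * t `^ beta)%:E).
  have := phi_meas 1 T beta ltr01; apply: eq_measurable_fun => x _.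
  by rewrite mul1r.
have -> : (\int[mu]_(t in `]0%R, b[) (`|f (l * t)| * t `^ beta)%:E =
    \int[mu]_(t in `]0%R, b[) ((l `^ (- beta))%:E * (`|f (l * t)| * (l * t) `^ beta)%:E))%E.
  apply: eq_integral => x; rewrite inE/= in_itv/= => /andP[x0 _].
  rewrite -EFinM; congr EFin; rewrite powRM ?ltW// powRN.
  by field; rewrite gt_eqF// powR_gt0.
have mG : measurable_fun `]0%R, b[ (fun x => (`|f (l * x)| * (l * x) `^ beta)%:E).
  exact: phi_meask.
rewrite ge0_integralZl_EFin ?powR_ge0//; last first.
  by move=> x _; rewrite lee_fin mulr_ge0 ?powR_ge0.
have sub : `]0%R, (l * b)%R[%classic `<=` `]0%R, T[%classic.
  by apply: subset_itvl; rewrite bnd_simp.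
rewrite -(preimage_scale_oo l b l0).
rewrite (@integral_scale _ l _ (fun s => (`|f s| * s `^ beta)%:E) l0)//; last 2 first.
- exact: (measurable_funS (measurable_itv _) sub mF).
- by move=> x _; rewrite lee_fin mulr_ge0 ?powR_ge0.
rewrite muleA -EFinM.
have -> : l `^ (- beta) * l^-1 = l `^ (-1 - beta).
  by rewrite -powR_inv1 ?ltW// -powRD ?(gt_eqF l0) ?implybT// addrC.
apply: lee_wpmul2l; first by rewrite lee_fin powR_ge0.
apply: ge0_subset_integral => //.
  by move=> x _; rewrite lee_fin mulr_ge0 ?powR_ge0.
Qed.
End meas.

Section sumint.
Context {R : realType}.
Local Notation mu := (@lebesgue_measure R).

Lemma int_le_add (D : set R) (h u v : R -> R) (a b : R) (I : \bar R) :
  measurable D -> 0 <= a -> 0 <= b -> (0 <= I)%E ->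
  (forall x, D x -> 0 <= h x) -> (forall x, D x -> 0 <= u x) ->
  (forall x, D x -> 0 <= v x) ->
  measurable_fun D h -> measurable_fun D u -> measurable_fun D v ->
  (forall x, D x -> h x <= u x + v x) ->
  (\int[mu]_(x in D) (u x)%:E <= a%:E * I)%E ->
  (\int[mu]_(x in D) (v x)%:E <= b%:E * I)%E ->
  (\int[mu]_(x in D) (h x)%:E <= (a + b)%:E * I)%E.
Proof.
move=> mD a0 b0 I0 h0 u0 v0 mh mu_ mv huv iu iv.
apply: (@le_trans _ _ (\int[mu]_(x in D) ((u x)%:E + (v x)%:E))%E).
  apply: ge0_le_integral => //.
  - exact/measurable_EFinP.
  - by apply: emeasurable_funD; exact/measurable_EFinP.
rewrite ge0_integralD//; try exact/measurable_EFinP.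
by rewrite EFinD ge0_muleDl ?lee_fin// leeD.
Qed.
End sumint.

Definition phi {R : realType} (f : R -> R) (beta l t : R) := `|f (l * t)| * t `^ beta.

Section piece.
Context {R : realType} (f : R -> R).
Hypothesis df : forall t, 0 < t -> derivable f t 1.
Local Notation mu := (@lebesgue_measure R).

Lemma Kphi_ge0 (K beta l t : R) : 0 <= K -> 0 <= K * phi f beta l t.
Proof. by move=> K0; rewrite mulr_ge0// mulr_ge0 ?powR_ge0. Qed.

Lemma Kphi_meas (K beta l b : R) : 0 < l -> measurable_fun `]0%R, b[ (fun t => K * phi f beta l t).
Proof.
move=> l0; apply: measurable_funM; first exact: measurable_cst.
by apply/measurable_EFinP; exact: phi_meas.
Qed.

Lemma piece (K beta l b T : R) : 0 <= K -> 0 < l -> 0 < b -> l * b <= T ->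
  (\int[mu]_(t in `]0%R, b[) (K * phi f beta l t)%:E <=
   (K * l `^ (-1 - beta))%:E * \int[mu]_(t in `]0%R, T[) (`|f t| * t `^ beta)%:E)%E.
Proof.
move=> K0 l0 b0 lbT.
under eq_integral do rewrite EFinM.
rewrite ge0_integralZl_EFin//; last 2 first.
- by move=> x _; rewrite lee_fin mulr_ge0 ?powR_ge0.
- exact: phi_meas.
rewrite EFinM -muleA; apply: lee_wpmul2l; first by rewrite lee_fin.
exact: G1.
Qed.
End piece.
Lemma oppn_derive {R : realType} (h : R -> R) :
  (forall k t, 0 < t -> derivable (derive1n k h) t 1) ->
  forall k t, 0 < t -> derive1n k (fun x => - h x) t = - derive1n k h t.
Proof.
move=> dh; elim=> [//|k IH] t t0.
rewrite !derive1nS !derive1E.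
rewrite (@near_eq_derive _ _ _ _ (fun x => - derive1n k h x) t 1); last first.
  near=> x; apply: IH; near: x; exact: lt_nbhsr.
exact: (deriveN (dh k t t0)).
Unshelve. all: by end_near. Qed.

Fixpoint Bk {R : realType} (k : nat) : R :=
  match k with 0 => 2 | k'.+1 => 2 ^+ k'.+2 * Bk k' end.

Lemma Bk_gt0 {R : realType} k : 0 < @Bk R k.
Proof. by elim: k => [//|k IH] /=; rewrite mulr_gt0// exprn_gt0. Qed.

Section CM.
Context {R : realType} (f : R -> R).
Hypothesis df : forall t, 0 < t -> derivable f t 1.
Hypothesis cm : completely_monotone (fun t => - derive1 f t).
Local Notation g := (fun t => - derive1 f t).

Definition H k t := (-1) ^+ k * derive1n k g t.

Lemma gder k t : 0 < t -> derivable (derive1n k g) t 1.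
Proof. by case: cm => + _; apply. Qed.

Lemma H_ge0 k t : 0 < t -> 0 <= H k t.
Proof. by case: cm => _; apply. Qed.

Lemma fS k t : 0 < t -> derive1n k.+1 f t = - derive1n k g t.
Proof.
move=> t0; rewrite derive1Sn.
have -> : derive1n k (derive1 f) = derive1n k (fun x => - g x).
  by congr derive1n; apply/funext => x; rewrite opprK.
exact: (@oppn_derive R g gder k t t0).
Qed.

Lemma absF k t : 0 < t -> `|derive1n k.+1 f t| = H k t.
Proof.
move=> t0; rewrite fS // normrN -(ger0_norm (@H_ge0 k t t0)) /H normrM normrX.
by rewrite normrN1 expr1n mul1r.
Qed.

Lemma H_mvt k a b : 0 < a -> a < b ->
  exists2 c, c \in `]a, b[ & H k b - H k a = - H k.+1 c * (b - a).
Proof.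
move=> a0 ab.
have h1 : forall x, x \in `]a, b[ -> is_derive x 1 (derive1n k g) (derive1n k.+1 g x).
  move=> x xab.
  have x0 : 0 < x by move: xab; rewrite in_itv/= => /andP[/(lt_trans a0)].
  rewrite derive1nS derive1E; apply: derivableP; exact: gder.
have h2 : {within `[a, b], continuous (derive1n k g)}.
  apply: derivable_within_continuous => x xab.
  have x0 : 0 < x by move: xab; rewrite in_itv/= => /andP[/(lt_le_trans a0)].
  exact: gder.
have [c cab E] := @MVT R (derive1n k g) (derive1n k.+1 g) a b ab h1 h2.
by exists c => //; rewrite /H -mulrBr E exprS; ring.
Qed.

Lemma H_noninc k s t : 0 < s -> s <= t -> H k t <= H k s.
Proof.
move=> s0; rewrite le_eqVlt => /predU1P[->//|st].
have [c cst E] := H_mvt k s t s0 st.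
have c0 : 0 < c by move: cst; rewrite in_itv/= => /andP[/(lt_trans s0)].
rewrite -subr_le0 E mulNr oppr_le0 mulr_ge0 ?H_ge0// subr_ge0 ltW//.
Qed.

Lemma H_step k t : 0 < t -> H k.+1 t * t <= 2 * H k (t / 2).
Proof.
move=> t0; have t20 : 0 < t / 2 by lra.
have t2t : t / 2 < t by lra.
have [c cst E] := H_mvt k _ _ t20 t2t.
move: cst; rewrite in_itv/= => /andP[c1 c2].
have c0 : 0 < c by apply: lt_trans c1.
have Hc := H_noninc k.+1 _ _ c0 (ltW c2).
have Ht := @H_ge0 k t t0.
have Hc0 := @H_ge0 k.+1 t t0.
nra.
Qed.

Lemma g_step t : 0 < t -> g t * t <= 2 * (`|f (t / 2)| + `|f t|).
Proof.
move=> t0; have t20 : 0 < t / 2 by lra.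
have t2t : t / 2 < t by lra.
have h1 : forall x, x \in `]t / 2, t[ -> is_derive x 1 f (derive1 f x).
  move=> x xab.
  have x0 : 0 < x by move: xab; rewrite in_itv/= => /andP[/(lt_trans t20)].
  rewrite derive1E; apply: derivableP; exact: df.
have h2 : {within `[t / 2, t], continuous f}.
  apply: derivable_within_continuous => x xab.
  have x0 : 0 < x by move: xab; rewrite in_itv/= => /andP[/(lt_le_trans t20)].
  exact: df.
have [c cst E] := @MVT R f (derive1 f) _ _ t2t h1 h2.
move: cst; rewrite in_itv/= => /andP[c1 c2].
have c0 : 0 < c by apply: lt_trans c1.
have Hc := H_noninc 0 _ _ c0 (ltW c2).
rewrite /H /= !mul1r in Hc.
have a1 := ler_norm (f (t / 2)).
have a2 := ler_norm (- f t).
rewrite normrN in a2.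
nra.
Qed.
Lemma H_bound k t : 0 < t ->
  H k t * t ^+ k.+1 <= Bk k * (`|f (t / 2 ^+ k.+1)| + `|f (t / 2 ^+ k)|).
Proof.
elim: k t => [|k IH] t t0.
  by rewrite /H /= expr0 mul1r expr1 divr1; apply: g_step.
have t20 : 0 < t / 2 by lra.
have e1 : H k.+1 t * t ^+ k.+2 <= 2 * H k (t / 2) * t ^+ k.+1.
  rewrite exprS mulrA; apply: ler_wpM2r; first by rewrite exprn_ge0 ?ltW.
  exact: H_step.
apply: (le_trans e1).
have e2 : 2 * H k (t / 2) * t ^+ k.+1 =
    2 ^+ k.+2 * (H k (t / 2) * (t / 2) ^+ k.+1).
  rewrite expr_div_n [2 ^+ k.+2]exprS; field.
  by rewrite expf_neq0.
rewrite e2 /= -mulrA ler_wpM2l ?exprn_ge0//.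
have -> : t / 2 ^+ k.+2 = t / 2 / 2 ^+ k.+1.
  by rewrite [2 ^+ k.+2]exprS invfM mulrA.
have -> : t / 2 ^+ k.+1 = t / 2 / 2 ^+ k.
  by rewrite [2 ^+ k.+1]exprS invfM mulrA.
exact: IH.
Qed.

Lemma F_bound m c1 t : 0 < c1 -> 0 < t ->
  `|derive1n m.+1 f (c1 * t)| * t ^+ m.+1 <=
    ((Num.min c1 1)^-1 ^+ m.+1 * Bk m) *
    (`|f ((Num.min c1 1) / 2 ^+ m.+1 * t)| + `|f ((Num.min c1 1) / 2 ^+ m * t)|).
Proof.
move=> c10 t0; set c := Num.min c1 1.
have c0 : 0 < c by rewrite /c lt_min c10 ltr01.
have cc1 : c <= c1 by rewrite /c ge_min lexx.
have ct0 : 0 < c * t by rewrite mulr_gt0.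
clearbody c.
rewrite absF ?mulr_gt0//.
have e1 : H m (c1 * t) <= H m (c * t).
  by apply: H_noninc => //; rewrite ler_pM2r.
apply: (le_trans (ler_wpM2r (exprn_ge0 _ (ltW t0)) e1)).
have -> : H m (c * t) * t ^+ m.+1 = c^-1 ^+ m.+1 * (H m (c * t) * (c * t) ^+ m.+1).
  clear e1; rewrite exprMn exprVn; field; by rewrite expf_neq0 // gt_eqF.
rewrite -mulrA; apply: ler_wpM2l; first by rewrite exprn_ge0 // invr_ge0 ltW.
have -> : c / 2 ^+ m.+1 * t = c * t / 2 ^+ m.+1 by rewrite mulrAC.
have -> : c / 2 ^+ m * t = c * t / 2 ^+ m by rewrite mulrAC.
exact: H_bound.
Qed.
Lemma Fder k t : 0 < t -> derivable (derive1n k.+1 f) t 1.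
Proof.
move=> t0.
apply: (@near_eq_derivable _ _ _ (fun x => - derive1n k g x)); last first.
  have h := derivableN (gder k t t0); exact: h.
near=> x; apply/esym/fS; near: x; exact: lt_nbhsr.
Unshelve. all: by end_near. Qed.

Lemma Fcont k t : 0 < t -> {for t, continuous (derive1n k.+1 f)}.
Proof.
by move=> t0; apply: differentiable_continuous; rewrite -derivable1_diffP; apply: Fder.
Qed.
End CM.
Lemma young01 {R : realType} (A B a : R) : 0 <= A -> 0 <= B -> 0 <= a <= 1 ->
  A `^ a * B `^ (1 - a) <= A + B.
Proof.
move=> A0 B0 /andP[a0 a1].
have a1' : 0 <= 1 - a by rewrite subr_ge0.
have key : forall X, 0 <= X -> X `^ a * X `^ (1 - a) = X.
  move=> X X0; rewrite -powRD; first by rewrite addrC subrK powRr1.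
  by rewrite addrC subrK oner_eq0.
have [AB|BA] := leP A B.
- apply: (@le_trans _ _ (B `^ a * B `^ (1 - a))).
    by apply: ler_wpM2r; [exact: powR_ge0| exact: ge0_ler_powR].
  by rewrite key// lerDr.
- apply: (@le_trans _ _ (A `^ a * A `^ (1 - a))).
    by apply: ler_wpM2l; [exact: powR_ge0| apply: ge0_ler_powR => //; exact: ltW].
  by rewrite key// lerDl.
Qed.

Lemma ptwise {R : realType} (x y a b t : R) (p q : nat) : 0 <= a <= 1 -> 0 < t ->
  `|x| `^ a * `|y| `^ (1 - a) * t `^ (p%:R * a + q%:R * (1 - a) + b) <=
  (`|x| * t ^+ p + `|y| * t ^+ q) * t `^ b.
Proof.
move=> a01 t0.
have tn0 : t != 0 by rewrite gt_eqF.
rewrite (@powRD _ t (p%:R * a + q%:R * (1 - a)) b) ?tn0 ?implybT//.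
rewrite (@powRD _ t (p%:R * a) (q%:R * (1 - a))) ?tn0 ?implybT//.
rewrite !powRrM !powR_mulrn ?(ltW t0)//.
have -> : `|x| `^ a * `|y| `^ (1 - a) * ((t ^+ p) `^ a * (t ^+ q) `^ (1 - a) * t `^ b)
  = ((`|x| * t ^+ p) `^ a * (`|y| * t ^+ q) `^ (1 - a)) * t `^ b.
  by rewrite !powRM ?exprn_ge0 ?normr_ge0 ?(ltW t0)// mulrA mulrACA.
apply: ler_wpM2r; first exact: powR_ge0.
by apply: young01 => //; rewrite mulr_ge0 ?exprn_ge0 ?(ltW t0).
Qed.

Lemma meas_pow_abs {R : realType} (h : R -> R) (c b a : R) : 0 < c ->
  (forall s, 0 < s -> {for s, continuous h}) ->
  measurable_fun `]0%R, b[ (fun t => `|h (c * t)| `^ a).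
Proof.
move=> c0 ch.
have m1 : measurable_fun `]0%R, b[ (fun t => `|h (c * t)|).
  apply: mcont => t t0.
  apply: (@continuous_comp _ _ _ (fun t => c * t) (fun s => `|h s|)).
    exact: mulrl_continuous.
  apply: (@continuous_comp _ _ _ h (@Num.norm _ R)); first exact: ch (mulr_gt0 c0 t0).
  exact: norm_continuous.
have := measurableT_comp (measurable_powR a) m1; exact.
Qed.

Lemma fin_step {R : realType} (X I e : \bar R) (C1 C : R) :
  (0 <= I)%E -> (0 <= e)%E -> 0 <= C1 -> C1 <= C ->
  (X <= C1%:E * I)%E -> (X <= C%:E * (I + e))%E.
Proof.
move=> I0 e0 C10 C1C XI; apply: (le_trans XI).
apply: (@le_trans _ _ (C%:E * I)%E).
  by apply: lee_wpmul2r.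
apply: lee_wpmul2l; first by rewrite lee_fin (le_trans C10).
exact: leeDl.
Qed.

Theorem lemma6p5 (R : realType) (alpha beta c1 c2 : R) (m n : nat) :
  0 <= alpha <= 1 -> -1 < beta -> (0 < m)%N -> (0 < n)%N -> 0 < c1 -> 0 < c2 ->
  exists C : R, 0 < C /\
  forall (f : R -> R) (t0 : R), 0 < t0 ->
    (forall t : R, 0 < t -> derivable f t 1) ->
    completely_monotone (fun t => - derive1 f t) ->
    (\int[lebesgue_measure]_(t in `]0%R, t0[) (`|f t| * t `^ beta)%:E < +oo)%E ->
    (\int[lebesgue_measure]_(t in `]0%R, t0[)
        (`|derive1n m f (c1 * t)| `^ alpha * `|derive1n n f (c2 * t)| `^ (1 - alpha)
          * t `^ (m%:R * alpha + n%:R * (1 - alpha) + beta))%:E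
      <= C%:E * (\int[lebesgue_measure]_(t in `]0%R, t0[) (`|f t| * t `^ beta)%:E
                 + (`|f t0| * t0 `^ (1 + beta))%:E))%E
    /\
    (\int[lebesgue_measure]_(t in `]0%R, t0[)
        (`|f (c1 * t)| `^ alpha * `|derive1n n f (c2 * t)| `^ (1 - alpha)
          * t `^ (n%:R * (1 - alpha) + beta))%:E
      <= C%:E * (\int[lebesgue_measure]_(t in `]0%R, (Num.max c1 1 * t0)%R[) (`|f t| * t `^ beta)%:E
                 + (`|f t0| * t0 `^ (1 + beta))%:E))%E.
Proof.
move=> a01 b1 m0 n0 c10 c20.
case: m m0 => // m' _; case: n n0 => // n' _.
set c := Num.min c1 1; set d := Num.min c2 1.
have c0 : 0 < c by rewrite /c lt_min c10 ltr01.
have d0 : 0 < d by rewrite /d lt_min c20 ltr01.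
have cle1 : c <= 1 by rewrite /c ge_min lexx orbT.
have dle1 : d <= 1 by rewrite /d ge_min lexx orbT.
have le1 : forall (x : R) k, 0 < x -> x <= 1 -> x / 2 ^+ k <= 1.
  move=> x k x0 x1; rewrite ler_pdivrMr ?exprn_gt0// mul1r (le_trans x1)//.
  by rewrite exprn_ege1// ler1n.
have gt0 : forall (x : R) k, 0 < x -> 0 < x / 2 ^+ k.
  by move=> x k x0; rewrite divr_gt0// exprn_gt0.
set Km := c^-1 ^+ m'.+1 * Bk m'.
set Kn := d^-1 ^+ n'.+1 * Bk n'.
have Km0 : 0 <= Km by rewrite mulr_ge0 ?exprn_ge0 ?invr_ge0 ?ltW ?Bk_gt0.
have Kn0 : 0 <= Kn by rewrite mulr_ge0 ?exprn_ge0 ?invr_ge0 ?ltW ?Bk_gt0.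
set l1 := c / 2 ^+ m'.+1; set l2 := c / 2 ^+ m'.
set n1 := d / 2 ^+ n'.+1; set n2 := d / 2 ^+ n'.
set pw := fun x : R => x `^ (-1 - beta).
set C1 := Km * pw l1 + (Km * pw l2 + (Kn * pw n1 + Kn * pw n2)).
set C2 := 1 * pw c1 + (Kn * pw n1 + Kn * pw n2).
have C10 : 0 <= C1 by rewrite /C1; repeat apply: addr_ge0; apply: mulr_ge0 => //; exact: powR_ge0.
have C20 : 0 <= C2 by rewrite /C2; repeat apply: addr_ge0; apply: mulr_ge0 => //; exact: powR_ge0.
exists (1 + C1 + C2); split; first lra.
move=> f t0 t00 df cm _.
have I0 : forall T, (0 <= \int[lebesgue_measure]_(t in `]0%R, T[) (`|f t| * t `^ beta)%:E)%E.
  by move=> T; apply: integral_ge0 => x _; rewrite lee_fin mulr_ge0 ?powR_ge0.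
have e0 : (0 <= (`|f t0| * t0 `^ (1 + beta))%:E)%E by rewrite lee_fin mulr_ge0 ?powR_ge0.
have phi0 : forall K l t, 0 <= K -> 0 <= K * phi f beta l t.
  by move=> K l t K0; exact: Kphi_ge0.
have pc : forall K l T, 0 <= K -> 0 < l -> l * t0 <= T ->
    (\int[lebesgue_measure]_(t in `]0%R, t0[) (K * phi f beta l t)%:E <=
     (K * pw l)%:E * \int[lebesgue_measure]_(t in `]0%R, T[) (`|f t| * t `^ beta)%:E)%E.
  by move=> K l T K0 l0 lT; apply: piece.
have pc1 : forall K l, 0 <= K -> 0 < l -> l <= 1 ->
    (\int[lebesgue_measure]_(t in `]0%R, t0[) (K * phi f beta l t)%:E <=
     (K * pw l)%:E * \int[lebesgue_measure]_(t in `]0%R, t0[) (`|f t| * t `^ beta)%:E)%E.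
  by move=> K l K0 l0 l1'; apply: pc => //; apply: ler_piMl => //; exact: ltW.
have mK : forall K l, 0 < l -> measurable_fun `]0%R, t0[ (fun t => K * phi f beta l t).
  by move=> K l l0; apply: Kphi_meas.
have ht0 : forall x, `]0%R, t0[%classic x -> 0 < x.
  by move=> x; rewrite /= in_itv/= => /andP[].
split.
- apply: (@fin_step R _ _ _ C1 _ (I0 t0) e0 C10); first lra.
  rewrite /C1.
  apply: (@int_le_add R `]0%R, t0[ _ (fun t => Km * phi f beta l1 t)
    (fun t => Km * phi f beta l2 t + (Kn * phi f beta n1 t + Kn * phi f beta n2 t))).
  + exact: measurable_itv.
  + by apply: mulr_ge0 => //; exact: powR_ge0.
  + by repeat apply: addr_ge0; apply: mulr_ge0 => //; exact: powR_ge0.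
  + exact: I0.
  + by move=> x _; rewrite !mulr_ge0 ?powR_ge0.
  + by move=> x _; apply: phi0.
  + by move=> x _; rewrite !addr_ge0 ?phi0.
  + apply: measurable_funM; [apply: measurable_funM|].
    * apply: meas_pow_abs => // s s0; exact: Fcont.
    * apply: meas_pow_abs => // s s0; exact: Fcont.
    * apply: (measurable_funS measurableT) => //; exact: measurable_powR.
  + by apply: mK; apply: gt0.
  + by apply: measurable_funD; [|apply: measurable_funD]; apply: mK; apply: gt0.
  + move=> x /ht0 x0.
    apply: (le_trans (ptwise _ _ _ _ _ _ _ a01 x0)).
    have A := F_bound f df cm m' c1 x c10 x0.
    have B := F_bound f df cm n' c2 x c20 x0.
    rewrite /phi -/c -/d -/Km -/Kn -/l1 -/l2 -/n1 -/n2 in A B *.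
    have P0 : 0 <= x `^ beta by exact: powR_ge0.
    nra.
  + by apply: pc1 => //; [apply: gt0|apply: le1].
  + apply: (@int_le_add R `]0%R, t0[ _ (fun t => Km * phi f beta l2 t)
      (fun t => Kn * phi f beta n1 t + Kn * phi f beta n2 t)).
    * exact: measurable_itv.
    * by apply: mulr_ge0 => //; exact: powR_ge0.
    * by repeat apply: addr_ge0; apply: mulr_ge0 => //; exact: powR_ge0.
    * exact: I0.
    * by move=> x _; rewrite !addr_ge0 ?phi0.
    * by move=> x _; apply: phi0.
    * by move=> x _; rewrite !addr_ge0 ?phi0.
    * by apply: measurable_funD; [|apply: measurable_funD]; apply: mK; apply: gt0.
    * by apply: mK; apply: gt0.
    * by apply: measurable_funD; apply: mK; apply: gt0.
    * by move=> x _.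
    * by apply: pc1 => //; [apply: gt0|apply: le1].
    * apply: (@int_le_add R `]0%R, t0[ _ (fun t => Kn * phi f beta n1 t)
        (fun t => Kn * phi f beta n2 t)).
      -- exact: measurable_itv.
      -- by apply: mulr_ge0 => //; exact: powR_ge0.
      -- by apply: mulr_ge0 => //; exact: powR_ge0.
      -- exact: I0.
      -- by move=> x _; rewrite !addr_ge0 ?phi0.
      -- by move=> x _; apply: phi0.
      -- by move=> x _; apply: phi0.
      -- by apply: measurable_funD; apply: mK; apply: gt0.
      -- by apply: mK; apply: gt0.
      -- by apply: mK; apply: gt0.
      -- by move=> x _.
      -- by apply: pc1 => //; [apply: gt0|apply: le1].
      -- by apply: pc1 => //; [apply: gt0|apply: le1].
- apply: (@fin_step R _ _ _ C2 _ (I0 _) e0 C20); first lra.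
  set T := Num.max c1 1 * t0.
  have lT : forall l, 0 < l -> l <= 1 -> l * t0 <= T.
    move=> l l0 l1'; rewrite /T ler_wpM2r ?(ltW t00)//.
    by rewrite le_max l1' orbT.
  rewrite /C2.
  apply: (@int_le_add R `]0%R, t0[ _ (fun t => 1 * phi f beta c1 t)
    (fun t => Kn * phi f beta n1 t + Kn * phi f beta n2 t)).
  + exact: measurable_itv.
  + by apply: mulr_ge0 => //; exact: powR_ge0.
  + by repeat apply: addr_ge0; apply: mulr_ge0 => //; exact: powR_ge0.
  + exact: I0.
  + by move=> x _; rewrite !mulr_ge0 ?powR_ge0.
  + by move=> x _; apply: phi0.
  + by move=> x _; rewrite !addr_ge0 ?phi0.
  + apply: measurable_funM; [apply: measurable_funM|].
    * apply: meas_pow_abs => // s s0; exact: fcont.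
    * apply: meas_pow_abs => // s s0; exact: Fcont.
    * apply: (measurable_funS measurableT) => //; exact: measurable_powR.
  + exact: mK.
  + by apply: measurable_funD; apply: mK; apply: gt0.
  + move=> x /ht0 x0.
    have P := ptwise (f (c1 * x)) (derive1n n'.+1 f (c2 * x)) alpha beta x 0 n'.+1 a01 x0.
    rewrite mul0r add0r expr0 mulr1 in P.
    apply: (le_trans P).
    have B := F_bound f df cm n' c2 x c20 x0.
    rewrite /phi -/d -/Kn -/n1 -/n2 in B *.
    have P0 : 0 <= x `^ beta by exact: powR_ge0.
    nra.
  + by apply: pc => //; rewrite /T ler_wpM2r ?(ltW t00)// le_max lexx.
  + apply: (@int_le_add R `]0%R, t0[ _ (fun t => Kn * phi f beta n1 t)
        (fun t => Kn * phi f beta n2 t)).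
    * exact: measurable_itv.
    * by apply: mulr_ge0 => //; exact: powR_ge0.
    * by apply: mulr_ge0 => //; exact: powR_ge0.
    * exact: I0.
    * by move=> x _; rewrite !addr_ge0 ?phi0.
    * by move=> x _; apply: phi0.
    * by move=> x _; apply: phi0.
    * by apply: measurable_funD; apply: mK; apply: gt0.
    * by apply: mK; apply: gt0.
    * by apply: mK; apply: gt0.
    * by move=> x _.
    * by apply: pc => //; [apply: gt0|apply: lT; [apply: gt0|apply: le1]].
    * by apply: pc => //; [apply: gt0|apply: lT; [apply: gt0|apply: le1]].
Qed.
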